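(* Let $\mathcal{X}\subseteq\mathcal{B}(0,R)$ be compact convex, $\mathcal{Z}$ a set and $f:\mathcal{X}\times\mathcal{Z}\to\mathbb{R}$ with $f(\cdot,z)\in\mathcal{F}^0_{\mathcal{X}}(L)$ for all $z$. Let $\pi$ be any permutation of $[n]$, $K\ge1$, $T=nK$, and let $(\eta_t)_{t\in[T]}$ be a non-increasing sequence of positive step sizes. Fixed-permutation SGD $\mathcal{A}_{\sf PerSGD}$ on $S=(z_1,\dots,z_n)$: start from a fixed initial point $x^0_{n+1}\in\mathcal{X}$; for $k=1,\dots,K$ set $x^k_1=x^{k-1}_{n+1}$ and for $t=1,\dots,n$ set $x^k_{t+1}=\mathsf{Proj}_{\mathcal{X}}(x^k_t-\eta_{(k-1)n+t}\nabla f(x^k_t,z_{\pi(t)}))$, and let $\bar\eta_k=\sum_{t=1}^n\eta_{(k-1)n+t}$; output $\bar x^K=\frac{1}{\sum_{k\in[K]}\bar\eta_k}\sum_{k\in[K]}\bar\eta_k x^k_1$. Then, with the same $\pi$ and initial point used for both datasets, $$\sup_{S\simeq S'}\|\mathcal{A}_{\sf PerSGD}(S)-\mathcal{A}_{\sf PerSGD}(S')\|\le\min\Big\{2R,\;2L\Big(\sqrt{\sum_{t=1}^{T-1}\eta_t^2}+\frac2n\sum_{t=1}^{T-1}\eta_t\Big)\Big\}.$$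
   Context: $\|\cdot\|$ is the Euclidean norm, $\mathcal{B}(0,R)$ the Euclidean ball of radius $R$, $\mathsf{Proj}_{\mathcal{X}}$ the Euclidean projection. $\mathcal{F}^0_{\mathcal{X}}(L)$ is the class of convex $L$-Lipschitz functions on $\mathcal{X}$ (Lipschitz on an open set containing $\mathcal{X}$, so subgradients have norm at most $L$). $\nabla f(x,z)$ is a fixed arbitrary selection of a subgradient of $f(\cdot,z)$ at $x$. Datasets $S,S'\in\mathcal{Z}^n$ are neighboring, $S\simeq S'$, if they differ in at most one entry. *)

(* Defs.v *)
From HB Require Import structures.
From mathcomp Require Import all_boot all_order all_algebra all_fingroup.
From mathcomp Require Import all_classical all_reals all_analysis.
Import numFieldNormedType.Exports.
Set Implicit Arguments. Unset Strict Implicit. Unset Printing Implicit Defensive.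
Import Order.TTheory GRing.Theory Num.Theory.
Local Open Scope classical_set_scope.
Local Open Scope ring_scope.

Section Defs.
Variables (R : realType) (d : nat).
Notation vec := 'rV[R]_d.

Definition dotv (u v : vec) : R := \sum_(i < d) u 0 i * v 0 i.
Definition enorm (u : vec) : R := Num.sqrt (dotv u u).

Definition convex_on (X : set vec) (h : vec -> R) : Prop :=
  forall x y t, X x -> X y -> 0 <= t <= 1 ->
    h (t *: x + (1 - t) *: y) <= t * h x + (1 - t) * h y.

Definition is_proj (X : set vec) (P : vec -> vec) : Prop :=
  forall x, X (P x) /\ forall y, X y -> enorm (x - P x) <= enorm (x - y).

(* Fixed-permutation SGD.  Step sizes eta are indexed from 1 (eta 1, ..., eta T). *)
Variables (Z : Type) (n : nat).

(* one epoch k (k >= 1): x^k_1 |-> x^k_{n+1}; t ranges over 'I_n (t = 0..n-1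
   corresponds to the paper's t = 1..n) *)
Definition persgd_epoch (P : vec -> vec) (g : Z -> vec -> vec) (eta : nat -> R)
  (pi : {perm 'I_n}) (S : 'I_n -> Z) (k : nat) (x : vec) : vec :=
  foldl (fun y (t : 'I_n) =>
           P (y - eta ((k - 1) * n + t.+1)%N *: g (S (pi t)) y)) x (enum 'I_n).

(* persgd_start j = x^{j+1}_1  (so persgd_start 0 = x^0_{n+1} = x0) *)
Fixpoint persgd_start P g eta pi S (x0 : vec) (j : nat) : vec :=
  match j with
  | 0 => x0
  | j'.+1 => persgd_epoch P g eta pi S j (persgd_start P g eta pi S x0 j')
  end.

Definition etabar (eta : nat -> R) (k : nat) : R :=
  \sum_(t < n) eta ((k - 1) * n + t.+1)%N.

Definition persgd P g eta pi (x0 : vec) (K : nat) (S : 'I_n -> Z) : vec :=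
  (\sum_(k < K) etabar eta k.+1)^-1 *:
    \sum_(k < K) (etabar eta k.+1 *: persgd_start P g eta pi S x0 k).

Definition neighboring (S S' : 'I_n -> Z) : Prop :=
  exists i : 'I_n, forall j, j != i -> S j = S' j.

End Defs.

(* Main.v *)
Require Import Defs.
From HB Require Import structures.
From mathcomp Require Import all_boot all_order all_algebra all_fingroup.
From mathcomp Require Import all_classical all_reals all_analysis.
From mathcomp Require Import ring lra zify.
Import numFieldNormedType.Exports.
Import Order.TTheory GRing.Theory Num.Theory.
Local Open Scope classical_set_scope.
Local Open Scope ring_scope.
Set Implicit Arguments. Unset Strict Implicit. Unset Printing Implicit Defensive.
Section Vec.
Variables (R : realType) (d : nat).
Notation vec := 'rV[R]_d.
Implicit Types u v w : vec.

Lemma dotvC u v : dotv u v = dotv v u.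
Proof. by apply: eq_bigr => i _; rewrite mulrC. Qed.
Lemma dotvDl u v w : dotv (u + v) w = dotv u w + dotv v w.
Proof. by rewrite /dotv -big_split; apply: eq_bigr => i _; rewrite mxE mulrDl. Qed.
Lemma dotvZl a u w : dotv (a *: u) w = a * dotv u w.
Proof. by rewrite /dotv mulr_sumr; apply: eq_bigr => i _; rewrite mxE mulrA. Qed.
Lemma dotvNl u w : dotv (- u) w = - dotv u w.
Proof. by rewrite /dotv -sumrN; apply: eq_bigr => i _; rewrite mxE mulNr. Qed.
Lemma dotvBl u v w : dotv (u - v) w = dotv u w - dotv v w.
Proof. by rewrite dotvDl dotvNl. Qed.
Lemma dotvDr u v w : dotv w (u + v) = dotv w u + dotv w v.
Proof. by rewrite dotvC dotvDl !(dotvC w). Qed.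
Lemma dotvZr a u w : dotv w (a *: u) = a * dotv w u.
Proof. by rewrite dotvC dotvZl dotvC. Qed.
Lemma dotvNr u w : dotv w (- u) = - dotv w u.
Proof. by rewrite dotvC dotvNl dotvC. Qed.
Lemma dotvBr u v w : dotv w (u - v) = dotv w u - dotv w v.
Proof. by rewrite dotvDr dotvNr. Qed.
Lemma dotv_ge0 u : 0 <= dotv u u.
Proof. by apply: sumr_ge0 => i _; rewrite -expr2 sqr_ge0. Qed.
Lemma dotv_eq0 u : dotv u u = 0 -> u = 0.
Proof.
move=> /eqP; rewrite psumr_eq0 => [/allP H|i _]; last by rewrite -expr2 sqr_ge0.
apply/rowP => i; rewrite mxE; have := H i (mem_index_enum _).
by rewrite -expr2 sqrf_eq0 => /eqP.
Qed.
Lemma enorm_ge0 u : 0 <= enorm u.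
Proof. exact: sqrtr_ge0. Qed.
Lemma enorm_sq u : enorm u ^+ 2 = dotv u u.
Proof. by rewrite sqr_sqrtr // dotv_ge0. Qed.

Lemma cauchy_schwarz u v : dotv u v <= enorm u * enorm v.
Proof.
have [a0|] := eqVneq (enorm u) 0.
  have : dotv u u = 0 by rewrite -enorm_sq a0 expr0n.
  move/dotv_eq0 ->; rewrite /dotv big1; [exact: mulr_ge0 (enorm_ge0 _) (enorm_ge0 _) | by move=> i _; rewrite mxE mul0r].
have [b0|] := eqVneq (enorm v) 0.
  have : dotv v v = 0 by rewrite -enorm_sq b0 expr0n.
  move/dotv_eq0 ->; rewrite /dotv big1; [move=> _; exact: mulr_ge0 (enorm_ge0 _) (enorm_ge0 _) | by move=> i _; rewrite mxE mulr0].
move=> hb ha.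
have ga : 0 < enorm u by rewrite lt0r ha enorm_ge0.
have gb : 0 < enorm v by rewrite lt0r hb enorm_ge0.
have := dotv_ge0 (enorm v *: u - enorm u *: v).
rewrite !(dotvBl, dotvBr, dotvZl, dotvZr) -!enorm_sq (dotvC v u).
set a := enorm u; set b := enorm v; set c := dotv u v => H.
have : 0 <= 2 * a * b * (a * b - c) by nra.
rewrite pmulr_rge0; first by rewrite subr_ge0.
by rewrite !mulr_gt0.
Qed.

Lemma enorm_leP u v : (enorm u <= enorm v) = (dotv u u <= dotv v v).
Proof. by rewrite ler_sqrt // dotv_ge0. Qed.

Lemma enorm_triangle u v : enorm (u + v) <= enorm u + enorm v.
Proof.
rewrite -(@ler_pXn2r _ 2) //; last 2 first.
- by rewrite nnegrE enorm_ge0.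
- by rewrite nnegrE addr_ge0 // enorm_ge0.
rewrite enorm_sq !(dotvDl, dotvDr) (dotvC v u) sqrrD !enorm_sq.
have := cauchy_schwarz u v; lra.
Qed.

Lemma enormZ a u : enorm (a *: u) = `|a| * enorm u.
Proof. by rewrite /enorm dotvZl dotvZr mulrA -expr2 sqrtrM ?sqr_ge0 // sqrtr_sqr. Qed.
Lemma enormN u : enorm (- u) = enorm u.
Proof. by rewrite -scaleN1r enormZ normrN normr1 mul1r. Qed.
End Vec.

Section Proj.
Variables (R : realType) (d : nat).
Notation vec := 'rV[R]_d.
Variables (X : set vec) (P : vec -> vec).
Hypotheses (cX : convex_set X) (hP : is_proj X P).

Lemma convex_mem x y t : X x -> X y -> 0 <= t -> t <= 1 -> X (t *: x + (1 - t) *: y).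
Proof.
move=> xX yX t0 t1.
have := cX (Itv01 t0 t1) (x := x) (y := y).
by rewrite !inE; apply.
Qed.

Lemma proj_vi x y : X y -> dotv (x - P x) (y - P x) <= 0.
Proof.
move=> yX; set p := P x; set w := x - p; set e := y - p.
have H t : 0 < t -> t <= 1 -> 2 * dotv w e <= t * dotv e e.
  move=> t0 t1.
  have h0 : enorm w <= enorm (w - t *: e).
    have := (hP x).2 _ (convex_mem yX (hP x).1 (ltW t0) t1).
    have -> : x - (t *: y + (1 - t) *: P x) = w - t *: e.
      by apply/rowP => i; rewrite /w /e /p !mxE; ring.
    by [].
  clearbody w e.
  move: h0; rewrite enorm_leP !(dotvBl, dotvBr, dotvZl, dotvZr) (dotvC e w) => h.
  have : 0 <= t * (t * dotv e e - 2 * dotv w e) by nra.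
  by rewrite pmulr_rge0 // subr_ge0.
set c := dotv w e; set b := dotv e e.
have b0 : 0 <= b by exact: dotv_ge0.
rewrite leNgt; apply/negP => c0.
have bc : 0 < b + c by exact: ltr_wpDl b0 c0.
have t1 : c / (b + c) <= 1 by rewrite ler_pdivrMr // mul1r lerDr.
have h := H _ (divr_gt0 c0 bc) t1.
have : c / (b + c) * b <= c by rewrite mulrAC ler_pdivrMr //; nra.
rewrite -/c -/b in h; lra.
Qed.

Lemma proj_nonexp x y : enorm (P x - P y) <= enorm (x - y).
Proof.
have h1 := proj_vi x (hP y).1.
have h2 := proj_vi y (hP x).1.
have cs := cauchy_schwarz (x - y) (P x - P y).
have e : dotv (x - P x) (P y - P x) + dotv (y - P y) (P x - P y) =
   dotv (P x - P y) (P x - P y) - dotv (x - y) (P x - P y).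
  rewrite /dotv -sumrB -big_split /=; apply: eq_bigr => i _; rewrite !mxE; ring.
rewrite -enorm_sq in e.
have := enorm_ge0 (P x - P y); have := enorm_ge0 (x - y).
nra.
Qed.

Variables (L : R).
Lemma step_same (g : vec -> vec) (f : vec -> R) eta x y :
  (forall x, X x -> forall y, X y -> f y >= f x + dotv (g x) (y - x)) ->
  (forall x, X x -> enorm (g x) <= L) -> 0 <= eta -> X x -> X y ->
  enorm (P (x - eta *: g x) - P (y - eta *: g y)) ^+ 2 <=
  enorm (x - y) ^+ 2 + 4 * L ^+ 2 * eta ^+ 2.
Proof.
move=> hsub hL e0 xX yX.
have hm : 0 <= dotv (g x - g y) (x - y).
  have := hsub _ xX _ yX; have := hsub _ yX _ xX.
  have -> : y - x = - (x - y) by rewrite opprB.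
  rewrite dotvNr dotvBl; lra.
have hg : enorm (g x - g y) <= 2 * L.
  have := enorm_triangle (g x) (- g y); rewrite enormN.
  have := hL _ xX; have := hL _ yX; lra.
apply: le_trans (_ : enorm (x - eta *: g x - (y - eta *: g y)) ^+ 2 <= _).
  by rewrite lerXn2r ?nnegrE ?enorm_ge0 // proj_nonexp.
have -> : x - eta *: g x - (y - eta *: g y) = (x - y) - eta *: (g x - g y).
  by apply/rowP => i; rewrite !mxE; ring.
move: (x - y) (g x - g y) hm hg => a b hm hg.
rewrite enorm_sq !(dotvBl, dotvBr, dotvZl, dotvZr) (dotvC b a) -!enorm_sq.
rewrite dotvC in hm.
have hb2 : enorm b ^+ 2 <= 4 * L ^+ 2.
  have := enorm_ge0 b; nra.
have := mulr_ge0 e0 hm.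
nra.
Qed.

Lemma step_diff (g1 g2 : vec -> vec) eta x y :
  (forall x, X x -> enorm (g1 x) <= L) ->
  (forall x, X x -> enorm (g2 x) <= L) -> 0 <= eta -> X x -> X y ->
  enorm (P (x - eta *: g1 x) - P (y - eta *: g2 y)) <=
  enorm (x - y) + 2 * L * eta.
Proof.
move=> h1 h2 e0 xX yX.
apply: le_trans (proj_nonexp _ _) _.
have -> : x - eta *: g1 x - (y - eta *: g2 y) = (x - y) + eta *: (g2 y - g1 x).
  by apply/rowP => i; rewrite !mxE; ring.
apply: le_trans (enorm_triangle _ _) _.
rewrite enormZ ger0_norm // lerD2l.
have := enorm_triangle (g2 y) (- g1 x); rewrite enormN.
have := h1 _ xX; have := h2 _ yX; nra.
Qed.
End Proj.

Section Seq.
Variables (R : realType) (d : nat).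
Notation vec := 'rV[R]_d.
Variables (X : set vec) (P : vec -> vec).
Hypotheses (cX : convex_set X) (hP : is_proj X P).
Variables (L : R) (Z : Type) (f : Z -> vec -> R) (g : Z -> vec -> vec).
Hypotheses (hsub : forall z x, X x -> forall y, X y -> f z y >= f z x + dotv (g z x) (y - x))
  (hL : forall z x, X x -> enorm (g z x) <= L).
Variables (n : nat) (e : 'I_n -> R) (zz zz' : 'I_n -> Z) (D : pred 'I_n).
Hypotheses (hD : forall t, ~~ D t -> zz t = zz' t) (he : forall t, 0 <= e t).

Definition Fs (z : 'I_n -> Z) x t := P (x - e t *: g (z t) x).

Lemma enorm0 : enorm (0 : vec) = 0.
Proof. by rewrite /enorm /dotv big1 ?sqrtr0 // => i _; rewrite mxE mul0r. Qed.

Lemma foldX z s x : X x -> X (foldl (Fs z) x s).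
Proof. by elim: s x => [|t s IH] x xX //=; apply: IH; exact: (hP _).1. Qed.

Lemma sum_sq_ge0 s : 0 <= \sum_(t <- s) e t ^+ 2.
Proof. by apply: sumr_ge0 => t _; rewrite sqr_ge0. Qed.

Lemma seqL1 s x y : X x -> X y -> count D s = 0%N ->
  enorm (foldl (Fs zz) x s - foldl (Fs zz') y s) ^+ 2 <=
  enorm (x - y) ^+ 2 + 4 * L ^+ 2 * \sum_(t <- s) e t ^+ 2.
Proof.
elim: s x y => [|t s IH] x y xX yX /=.
  by rewrite big_nil mulr0 addr0.
case Dt: (D t) => //= hc.
have := IH (Fs zz x t) (Fs zz' y t) (hP _).1 (hP _).1 hc.
have h1 := step_same cX hP (hsub (zz t)) (hL (zz t)) (he t) xX yX.
rewrite /Fs -hD ?Dt // big_cons.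
lra.
Qed.

Lemma seqL2 s x : X x -> (count D s <= 1)%N ->
  enorm (foldl (Fs zz) x s - foldl (Fs zz') x s) ^+ 2 <=
  4 * L ^+ 2 * \sum_(t <- s) e t ^+ 2.
Proof.
elim: s x => [|t s IH] x xX /=.
  by rewrite big_nil subrr enorm0 expr0n mulr0.
rewrite big_cons.
case Dt: (D t) => /= hc.
  have hc0 : count D s = 0%N by move: hc; rewrite add1n ltnS leqn0 => /eqP.
  have := seqL1 (hP (x - e t *: g (zz t) x)).1 (hP (x - e t *: g (zz' t) x)).1 hc0.
  have := step_diff cX hP (hL (zz t)) (hL (zz' t)) (he t) xX xX.
  rewrite subrr enorm0 add0r => h1.
  have h2 : enorm (P (x - e t *: g (zz t) x) - P (x - e t *: g (zz' t) x)) ^+ 2 <=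
            (2 * L * e t) ^+ 2.
    by have := enorm_ge0 (P (x - e t *: g (zz t) x) - P (x - e t *: g (zz' t) x)); nra.
  rewrite /Fs; lra.
have := IH (Fs zz x t) (hP _).1 hc.
rewrite /Fs -hD ?Dt //.
have := sum_sq_ge0 s; have := sqr_ge0 (e t); have := sqr_ge0 L; nra.
Qed.

Lemma seqL3 s x y C a : X x -> X y -> (count D s <= 1)%N -> 0 <= C -> 0 <= a ->
  (forall t, e t <= a) -> 0 <= L ->
  enorm (x - y) ^+ 2 + 4 * L ^+ 2 * \sum_(t <- s) e t ^+ 2 + 4 * L * a * C <= C ^+ 2 ->
  enorm (foldl (Fs zz) x s - foldl (Fs zz') y s) ^+ 2 <=
  enorm (x - y) ^+ 2 + 4 * L ^+ 2 * \sum_(t <- s) e t ^+ 2 + 4 * L * a * C.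
Proof.
move=> + + + C0 a0 hea L0.
elim: s x y => [|t s IH] x y xX yX /=.
  rewrite big_nil mulr0 addr0 => _ _.
  by rewrite lerDl !mulr_ge0.
rewrite big_cons.
have hs := sum_sq_ge0 s.
have het := he t; have heta := hea t.
case Dt: (D t) => /= hc hC.
  have hc0 : count D s = 0%N by move: hc; rewrite add1n ltnS leqn0 => /eqP.
  have := seqL1 (hP (x - e t *: g (zz t) x)).1 (hP (y - e t *: g (zz' t) y)).1 hc0.
  have := step_diff cX hP (hL (zz t)) (hL (zz' t)) (he t) xX yX.
  set d1 := enorm (P _ - P _); set d0 := enorm (x - y) => h1.
  have hC' : d0 ^+ 2 + 4 * L ^+ 2 * (e t ^+ 2 + \sum_(j <- s) e j ^+ 2) +
    4 * L * a * C <= C ^+ 2 by exact: hC.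
  have d10 : 0 <= d1 by exact: enorm_ge0.
  have d00 : 0 <= d0 by exact: enorm_ge0.
  have d0C : d0 <= C.
    rewrite -(@ler_pXn2r _ 2) ?nnegrE //.
    have := mulr_ge0 (mulr_ge0 L0 a0) C0.
    have := mulr_ge0 (sqr_ge0 L) (addr_ge0 (sqr_ge0 (e t)) hs); move: hC'; lra.
  have h2 : d1 ^+ 2 <= d0 ^+ 2 + 4 * L * a * C + 4 * L ^+ 2 * e t ^+ 2.
    apply: le_trans (_ : (d0 + 2 * L * e t) ^+ 2 <= _).
      by rewrite lerXn2r ?nnegrE // addr_ge0 // !mulr_ge0.
    have : L * e t * d0 <= L * a * C.
      by apply: ler_pM; rewrite ?mulr_ge0 //; apply: ler_pM.
    nra.
  rewrite /Fs; lra.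
have := step_same cX hP (hsub (zz t)) (hL (zz t)) (he t) xX yX.
move=> h1.
have hyp : enorm (Fs zz x t - Fs zz y t) ^+ 2 + 4 * L ^+ 2 * \sum_(j <- s) e j ^+ 2
   + 4 * L * a * C <= C ^+ 2.
  rewrite /Fs; move: hC h1; lra.
have := IH (Fs zz x t) (Fs zz y t) (hP _).1 (hP _).1 hc hyp.
have -> : Fs zz' y t = Fs zz y t by rewrite /Fs -hD ?Dt.
rewrite /Fs; move: h1; lra.
Qed.
End Seq.

Section Sums.
Variable (R : realType).

Lemma enum_sum n (F : 'I_n -> R) : \sum_(t <- enum 'I_n) F t = \sum_(t < n) F t.
Proof. by rewrite big_enum. Qed.

Lemma double_sum n (h : nat -> R) M :
  \sum_(0 <= m < M) \sum_(t < n) h (m * n + t.+1)%N = \sum_(1 <= t < M * n + 1) h t.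
Proof.
elim: M => [|M IH]; first by rewrite !big_geq.
rewrite big_nat_recr //= IH (big_cat_nat (n := (M * n + 1)%N) (p := (M.+1 * n + 1)%N)) /=; last 2 first.
- by rewrite leq_addl.
- lia.
congr (_ + _).
rewrite (big_addn 0 _ (M * n + 1)%N).
have -> : (M.+1 * n + 1 - (M * n + 1) = n)%N by rewrite mulSn; lia.
rewrite big_mkord; apply: eq_bigr => t _; congr h; lia.
Qed.

Lemma sum_widen (h : nat -> R) p q : (p <= q)%N ->
  (forall t, (1 <= t)%N -> (t < q)%N -> 0 <= h t) ->
  \sum_(1 <= t < p) h t <= \sum_(1 <= t < q) h t.
Proof.
move=> pq h0.
case: (leqP p 1) => p1.
  rewrite big_geq // big_nat_cond; apply: sumr_ge0 => t /andP [/andP [t1 tq] _].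
  exact: h0.
rewrite (big_cat_nat (n := p) (m := 1%N) (p := q)) /=; last 2 first.
- exact: ltnW.
- exact: pq.
rewrite lerDl big_nat_cond; apply: sumr_ge0 => t /andP [/andP [t1 tq] _].
apply: h0 => //; lia.
Qed.
End Sums.

Section Main.
Variables (R : realType) (d : nat) (X : set 'rV[R]_d) (Rad : R)
  (Z : Type) (f : Z -> 'rV[R]_d -> R) (g : Z -> 'rV[R]_d -> 'rV[R]_d) (L : R)
  (P : 'rV[R]_d -> 'rV[R]_d) (n K : nat) (pi : {perm 'I_n})
  (eta : nat -> R) (x0 : 'rV[R]_d).
Hypotheses (cX : convex_set X) (hP : is_proj X P)
  (hsub : forall z x, X x -> forall y, X y -> f z y >= f z x + dotv (g z x) (y - x))
  (hL : forall z x, X x -> enorm (g z x) <= L)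
  (n0 : (0 < n)%N) (K1 : (1 <= K)%N)
  (hpos : forall t, (1 <= t)%N -> (t <= n * K)%N -> 0 < eta t)
  (hmon : forall t, (1 <= t)%N -> (t < n * K)%N -> eta t.+1 <= eta t)
  (x0X : X x0) (L0 : 0 <= L).

Lemma eta_mono p q : (1 <= p)%N -> (p <= q)%N -> (q <= n * K)%N -> eta q <= eta p.
Proof.
move=> p1; elim: q => [|q IH]; first by rewrite leqn0 => /eqP p0; rewrite p0 in p1.
rewrite leq_eqVlt => /orP [/eqP -> //| pq] qK.
have h1 : eta q.+1 <= eta q by apply: hmon; lia.
have h2 : eta q <= eta p by apply: IH; lia.
exact: le_trans h1 h2.
Qed.

Definition ep j (t : 'I_n) := eta ((j.+1 - 1) * n + t.+1)%N.
Definition st S j := persgd_start P g eta pi S x0 j.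

Lemma st_succ S j : st S j.+1 = foldl (Fs P g (ep j) (fun t => S (pi t))) (st S j) (enum 'I_n).
Proof. by []. Qed.

Lemma stX S j : X (st S j).
Proof.
elim: j => [|j IH] //.
rewrite st_succ.
exact: (foldX hP g (ep j) (fun t => S (pi t)) (enum 'I_n) IH).
Qed.

Lemma ep_ge0 j t : (j < K)%N -> 0 <= ep j t.
Proof. move=> jK; apply: ltW; apply: hpos; rewrite subn1 /=; [lia|].
have := ltn_ord t; nia. Qed.


Definition E j := \sum_(t <- enum 'I_n) ep j t ^+ 2.
Definition aa j := eta ((j.+1 - 1) * n + 1)%N.
Definition bb j := if j is 0 then 0 else aa j.
Definition A := \sum_(1 <= t < n * K) eta t ^+ 2.
Definition B := \sum_(1 <= t < n * K) eta t.
Definition C := 2 * L * (Num.sqrt A + 2 / n%:R * B).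
Definition V j := 4 * L ^+ 2 * \sum_(0 <= m < j) E m + 4 * L * C * \sum_(0 <= m < j) bb m.

Lemma E_ge0 j : 0 <= E j.
Proof. by apply: sumr_ge0 => t _; rewrite sqr_ge0. Qed.

Lemma aa_ge0 j : (j < K)%N -> 0 <= aa j.
Proof. move=> jK; apply: ltW; apply: hpos; rewrite subn1 /=; nia. Qed.

Lemma bb_ge0 j : (j < K)%N -> 0 <= bb j.
Proof. by case: j => [|j] // jK; exact: aa_ge0. Qed.

Lemma B_ge0 : 0 <= B.
Proof.
rewrite /B big_nat_cond; apply: sumr_ge0 => t /andP [/andP [t1 tK] _].
apply: ltW; apply: hpos => //; lia.
Qed.

Lemma C_ge0 : 0 <= C.
Proof.
rewrite /C; apply: mulr_ge0; first by rewrite mulr_ge0.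
by rewrite addr_ge0 ?sqrtr_ge0 // mulr_ge0 ?B_ge0 // divr_ge0.
Qed.

Lemma V_succ j : V j.+1 = V j + 4 * L ^+ 2 * E j + 4 * L * C * bb j.
Proof. rewrite /V !big_nat_recr //=; ring. Qed.

Lemma V_mono j j' : (j <= j')%N -> (j' < K)%N -> V j <= V j'.
Proof.
move=> jj'; elim: j' jj' => [|j' IH]; first by rewrite leqn0 => /eqP ->.
rewrite leq_eqVlt => /orP [/eqP -> //| jj'] jK.
rewrite V_succ; apply: le_trans (IH _ _) _ => //; first by lia.
have := E_ge0 j'; have := bb_ge0 (ltnW jK); have := C_ge0.
have := sqr_ge0 L.
move=> h1 h2 h3 h4.
have := mulr_ge0 (mulr_ge0 L0 h2) h3.
have := mulr_ge0 h1 h4.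
lra.
Qed.

Lemma sumE_le : \sum_(0 <= m < K.-1) E m <= A.
Proof.
have -> : \sum_(0 <= m < K.-1) E m = \sum_(0 <= m < K.-1) \sum_(t < n) eta (m * n + t.+1)%N ^+ 2.
  apply: eq_bigr => m _; rewrite /E enum_sum; apply: eq_bigr => t _.
  by rewrite /ep subn1.
rewrite (double_sum n (fun t => eta t ^+ 2)).
apply: sum_widen; last by move=> t _ _; rewrite sqr_ge0.
lia.
Qed.

Lemma sumb_le : n%:R * \sum_(0 <= m < K.-1) bb m <= B.
Proof.
case HK: K.-1 => [|M]; first by rewrite big_geq // mulr0 B_ge0.
rewrite big_nat_recl //= add0r.
apply: le_trans (_ : \sum_(0 <= m < M) \sum_(t < n) eta (m * n + t.+1)%N <= _).
  rewrite mulr_sumr; apply: ler_sum_nat => m /andP [_ mM].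
  apply: le_trans (_ : \sum_(t < n) aa m.+1 <= _).
    by rewrite sumr_const card_ord mulr_natl.
  apply: ler_sum => t _; rewrite /aa subn1 /=.
  apply: eta_mono; have := ltn_ord t; nia.
rewrite (double_sum n eta).
apply: sum_widen; last by move=> t t1 tK; apply: ltW; apply: hpos => //; lia.
lia.
Qed.

Lemma A_ge0 : 0 <= A.
Proof. by apply: sumr_ge0 => t _; rewrite sqr_ge0. Qed.

Lemma V_le : V K.-1 <= C ^+ 2.
Proof.
have nn : 0 < n%:R :> R by rewrite ltr0n.
have hE := sumE_le.
have hb : \sum_(0 <= m < K.-1) bb m <= B / n%:R.
  by rewrite ler_pdivlMr // mulrC sumb_le.
have eB : B / n%:R = (2 / n%:R * B) / 2 by field; rewrite lt0r_neq0.
rewrite eB in hb.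
rewrite /V.
move: hE hb; rewrite /C.
have sA := sqr_sqrtr A_ge0.
have s0 := sqrtr_ge0 A.
have b0 : 0 <= 2 / n%:R * B by rewrite mulr_ge0 ?B_ge0 // divr_ge0.
move: (Num.sqrt A) sA s0 (2 / n%:R * B) b0 => s sA s0 b b0.
move: (\sum_(0 <= m < K.-1) E m) (\sum_(0 <= m < K.-1) bb m) => x y hx hy.
rewrite -sA in hx.
have h1 : L ^+ 2 * x <= L ^+ 2 * s ^+ 2 by rewrite ler_wpM2l ?sqr_ge0.
have h2 : L * (L * (s + b)) * y <= L * (L * (s + b)) * (b / 2).
  by rewrite ler_wpM2l // !mulr_ge0 // addr_ge0.
have h3 : 0 <= L ^+ 2 * s * b by rewrite !mulr_ge0 ?sqr_ge0.
nra.
Qed.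

Lemma count_pi (i : 'I_n) : (count (fun t => pi t == i) (enum 'I_n) <= 1)%N.
Proof.
have -> : count (fun t => pi t == i) (enum 'I_n) = count (pred1 ((pi^-1)%g i)) (enum 'I_n).
  apply: eq_count => t /=.
  by rewrite -(inj_eq (@perm_inj _ (pi^-1)%g)) permK.
by rewrite count_uniq_mem ?enum_uniq // leq_b1.
Qed.

Lemma ep_le j t : (j.+1 < K)%N -> ep j t <= aa j.
Proof.
move=> jK; rewrite /ep /aa subn1 /=; apply: eta_mono; have := ltn_ord t; nia.
Qed.

Lemma claim S S' (i : 'I_n) : (forall j, j != i -> S j = S' j) ->
  forall j, (j <= K.-1)%N -> enorm (st S j - st S' j) ^+ 2 <= V j.
Proof.
move=> hi.
have hD : forall t, ~~ (pi t == i) -> S (pi t) = S' (pi t) by move=> t; apply: hi.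
elim => [|j IH] hj.
  by rewrite /st /= subrr enorm0 expr0n /V !big_geq // !mulr0 addr0.
rewrite !st_succ.
have jK : (j < K)%N by lia.
case: j IH hj jK => [|j] IH hj jK.
  apply: le_trans (seqL2 cX hP hsub hL hD (fun t => ep_ge0 t jK) x0X (count_pi i)) _.
  by rewrite /V big_nat1 /= big_nat1 /E /= mulr0 addr0.
have hIH := IH (ltnW hj).
have hC : enorm (st S j.+1 - st S' j.+1) ^+ 2 + 4 * L ^+ 2 * E j.+1 + 4 * L * aa j.+1 * C
     <= C ^+ 2.
  apply: le_trans V_le.
  apply: le_trans (V_mono hj _); last by lia.
  rewrite V_succ /=; lra.
apply: le_trans (seqL3 cX hP hsub hL hD (fun t => ep_ge0 t jK) (stX S j.+1) (stX S' j.+1)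
   (count_pi i) C_ge0 (aa_ge0 jK) (fun t => ep_le t _) L0 hC) _.
  by lia.
rewrite V_succ /= -/(E j.+1); lra.
Qed.

Lemma w_gt0 k : (k < K)%N -> 0 < etabar n eta k.+1.
Proof.
move=> kK; rewrite /etabar (bigD1 (Ordinal n0)) //=.
have h1 : 0 < eta ((k.+1 - 1) * n + 1)%N by apply: hpos; rewrite subn1 /=; nia.
have h2 : 0 <= \sum_(t < n | t != Ordinal n0) eta ((k.+1 - 1) * n + t.+1)%N.
  apply: sumr_ge0 => t _; apply: ltW; apply: hpos; rewrite subn1 /=; have := ltn_ord t; nia.
lra.
Qed.

Lemma enorm_sum (F : 'I_K -> 'rV[R]_d) : enorm (\sum_(k < K) F k) <= \sum_(k < K) enorm (F k).
Proof.
apply: (big_rec2 (fun a b => enorm a <= b)); first by rewrite enorm0.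
move=> k a b _ h; apply: le_trans (enorm_triangle _ _) _; lra.
Qed.

Lemma out_bound S S' M : (forall k, (k < K)%N -> enorm (st S k - st S' k) <= M) ->
  enorm (persgd P g eta pi x0 K S - persgd P g eta pi x0 K S') <= M.
Proof.
move=> hM.
rewrite /persgd -scalerBr -sumrB.
have W0 : 0 < \sum_(k < K) etabar n eta k.+1.
  case: K K1 w_gt0 => // K' _ hw; rewrite big_ord_recl.
  have := hw 0%N isT.
  have : 0 <= \sum_(i < K') etabar n eta (bump 0 i).+1.
    by apply: sumr_ge0 => k _; apply: ltW; apply: hw; rewrite /bump /=; have := ltn_ord k; lia.
  lra.
rewrite enormZ ger0_norm; last by rewrite invr_ge0 ltW.
rewrite ler_pdivrMl //.
apply: le_trans (enorm_sum _) _.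
rewrite mulr_suml; apply: ler_sum => k _.
have wk := w_gt0 (ltn_ord k).
rewrite -scalerBr enormZ ger0_norm; last exact: ltW.
by rewrite ler_wpM2l ?hM // ltW.
Qed.
End Main.


Theorem theorem3p4 (R : realType) (d : nat) (X : set 'rV[R]_d) (Rad : R)
  (Z : Type) (f : Z -> 'rV[R]_d -> R) (g : Z -> 'rV[R]_d -> 'rV[R]_d) (L : R)
  (P : 'rV[R]_d -> 'rV[R]_d) (n K : nat) (pi : {perm 'I_n})
  (eta : nat -> R) (x0 : 'rV[R]_d) :
  compact X -> convex_set X -> (forall x, X x -> enorm x <= Rad) ->
  is_proj X P ->
  (* f(., z) in F^0_X(L) for every z *)
  (forall z, convex_on X (f z)) ->
  (forall z, exists U : set 'rV[R]_d, open U /\ X `<=` U /\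
     forall x y, U x -> U y -> `|f z x - f z y| <= L * enorm (x - y)) ->
  (* g z x is a subgradient of f(., z) at x, of norm at most L *)
  (forall z x, X x -> forall y, X y -> f z y >= f z x + dotv (g z x) (y - x)) ->
  (forall z x, X x -> enorm (g z x) <= L) ->
  (0 < n)%N -> (1 <= K)%N ->
  (forall t, (1 <= t)%N -> (t <= n * K)%N -> 0 < eta t) ->
  (forall t, (1 <= t)%N -> (t < n * K)%N -> eta t.+1 <= eta t) ->
  X x0 ->
  forall S S' : 'I_n -> Z, neighboring S S' ->
    enorm (persgd P g eta pi x0 K S - persgd P g eta pi x0 K S') <=
    Num.min (2 * Rad)
      (2 * L * (Num.sqrt (\sum_(1 <= t < n * K) eta t ^+ 2)
                + 2 / n%:R * \sum_(1 <= t < n * K) eta t)).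
Proof.
move=> _ cX hR hP _ _ hsub hL n0 K1 hpos hmon x0X S S' [i hi].
have L0 : 0 <= L := le_trans (enorm_ge0 _) (hL (S (Ordinal n0)) x0 x0X).
rewrite le_min; apply/andP; split.
  apply: (out_bound n0 K1 hpos L0) => k kK.
  apply: le_trans (enorm_triangle _ _) _; rewrite enormN.
  have := hR _ (stX g pi eta hP x0X S k); have := hR _ (stX g pi eta hP x0X S' k).
  lra.
apply: (out_bound n0 K1 hpos L0) => k kK.
have h := claim pi cX hP hsub hL n0 K1 hpos hmon x0X L0 hi (j := k) (ltac:(lia)).
have hV := V_mono n0 K1 hpos L0 (j := k) (j' := K.-1) (ltac:(lia)) (ltac:(lia)).
have hC := V_le n0 K1 hpos hmon L0.
have C0 := C_ge0 n0 K1 hpos L0.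
suff : enorm (st g P pi eta x0 S k - st g P pi eta x0 S' k) <= C L n K eta by [].
rewrite -(@ler_pXn2r _ 2) ?nnegrE ?enorm_ge0 //.
apply: le_trans h _; apply: le_trans hV hC.
Qed.
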